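(* Let ${\mathbb X}$ be a non-degenerate Ptolemaic normed space, let $M\colon[0,\infty)\times[0,\infty)\to[0,\infty)$ be symmetric and moderately increasing, and suppose $\rho_M(x,y)=\dfrac{\Vert x-y\Vert}{M(\Vert x\Vert,\Vert y\Vert)}$ is a metric on ${\mathbb X}$. Let $g\colon{\mathbb X}\to{\mathbb X}$ satisfy $g(0)=0$ and $\frac1L\Vert x-y\Vert\le\Vert g(x)-g(y)\Vert\le L\Vert x-y\Vert$ for all $x,y\in{\mathbb X}$, for some $L\ge 1$. Then $\frac1{L^3}\rho_M(x,y)\le\rho_M(g(x),g(y))\le L^3\rho_M(x,y)$ for all $x,y\in{\mathbb X}$.
   Context: A normed space ${\mathbb X}$ is Ptolemaic if $\Vert z-w\Vert\Vert x-y\Vert\le\Vert y-w\Vert\Vert x-z\Vert+\Vert x-w\Vert\Vert z-y\Vert$ for all $x,y,z,w$; non-degenerate means ${\mathbb X}\ne\{0\}$. Convention $0/0=0$; metrics may take the value $\infty$. A function $f\colon[0,\infty)\to[0,\infty)$ is moderately increasing if it is increasing and $f(t)/t$ is decreasing; a function $M$ of two variables is moderately increasing if $M(x,\cdot)$ and $M(\cdot,x)$ are moderately increasing for each fixed $x\ge 0$. *)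

(* Defs.v *)
From HB Require Import structures.
From mathcomp Require Import all_boot all_order all_algebra.
From mathcomp Require Import all_classical all_reals all_analysis.
Set Implicit Arguments. Unset Strict Implicit. Unset Printing Implicit Defensive.
Import Order.TTheory GRing.Theory Num.Theory.
Import numFieldNormedType.Exports.
Local Open Scope ring_scope.

Definition ptolemaic_space (R : realType) (X : normedModType R) : Prop :=
  forall x y z w : X,
    `|z - w| * `|x - y| <= `|y - w| * `|x - z| + `|x - w| * `|z - y|.

Definition nondegenerate_space (R : realType) (X : normedModType R) : Prop :=
  exists x : X, x != 0.

Definition moderately_increasing1 (R : realType) (f : R -> R) : Prop :=
  (forall s t, 0 <= s -> s <= t -> f s <= f t) /\
  (forall s t, 0 < s -> s <= t -> f t / t <= f s / s).

Definition moderately_increasing2 (R : realType) (M : R -> R -> R) : Prop :=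
  forall a, 0 <= a -> moderately_increasing1 (M a) /\
                      moderately_increasing1 (fun t => M t a).

Definition symmetric_on_nonneg (R : realType) (M : R -> R -> R) : Prop :=
  forall a b, 0 <= a -> 0 <= b -> M a b = M b a.

Definition nonneg_on_nonneg (R : realType) (M : R -> R -> R) : Prop :=
  forall a b, 0 <= a -> 0 <= b -> 0 <= M a b.

(* rho_M(x,y) = ||x-y|| / M(||x||,||y||) with 0/0 = 0 and a/0 = +oo (a > 0). *)
Definition rhoM (R : realType) (X : normedModType R) (M : R -> R -> R)
    (x y : X) : \bar R :=
  if M `|x| `|y| == 0 then (if x == y then 0%E else +oo%E)
  else (`|x - y| / M `|x| `|y|)%:E.

Definition is_emetric (T : Type) (R : realType) (d : T -> T -> \bar R) : Prop :=
  (forall x y, d x y = 0%E <-> x = y) /\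
  (forall x y, d x y = d y x) /\
  (forall x y z, (d x z <= d x y + d y z)%E).

(* Main.v *)
Require Import Defs.
From HB Require Import structures.
From mathcomp Require Import all_boot all_order all_algebra.
From mathcomp Require Import all_classical all_reals all_analysis.
From mathcomp Require Import ring lra.
Import Order.TTheory GRing.Theory Num.Theory.
Import numFieldNormedType.Exports.
Local Open Scope ring_scope.

Lemma mb_half (R : realType) (f : R -> R) (L a a' : R) :
  moderately_increasing1 f -> (forall t, 0 <= t -> 0 <= f t) -> 1 <= L ->
  0 <= a -> a <= a' -> a' <= L * a -> f a' <= L * f a /\ f a <= L * f a'.
Proof.
move=> [finc fdec] f0 L1 a0 aa' a'L.
have fa0 := f0 _ a0.
have fa'0 : 0 <= f a' by apply: f0; lra.
have h1 : f a <= f a' by apply: finc.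
split; last by nra.
have [az|ap] := eqVneq a 0.
  rewrite az mulr0 in a'L aa'; have -> : a' = 0 by lra.
  rewrite az in fa0 *; nra.
have apos : 0 < a by rewrite lt0r ap.
have a'pos : 0 < a' by lra.
have hd := fdec _ _ apos aa'.
set p := f a' / a' in hd.
set q := f a / a in hd.
have ep : f a' = p * a' by rewrite /p mulfVK // gt_eqF.
have eq : f a = q * a by rewrite /q mulfVK // gt_eqF.
have q0 : 0 <= q by rewrite /q divr_ge0 // ltW.
rewrite ep eq; nra.
Qed.

Lemma mb (R : realType) (f : R -> R) (L a a' : R) :
  moderately_increasing1 f -> (forall t, 0 <= t -> 0 <= f t) -> 1 <= L ->
  0 <= a -> 0 <= a' -> a <= L * a' -> a' <= L * a ->
  f a' <= L * f a /\ f a <= L * f a'.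
Proof.
move=> mi f0 L1 a0 a'0 h1 h2.
have [aa'|aa'] := lerP a a'.
  exact: mb_half.
have [] := mb_half _ _ _ _ _ mi f0 L1 a'0 (ltW aa') h1.
by move=> *; split.
Qed.

Lemma inv_le (R : realType) (m m' c : R) : 0 < m -> 0 < m' -> 0 <= c -> m' <= c * m -> m^-1 <= c / m'.
Proof.
move=> mp m'p c0 h.
by rewrite ler_pdivlMr // mulrC ler_pdivrMr.
Qed.
Lemma key (R : realType) (d d' m m' L : R) : 0 < m -> 0 < m' -> 0 <= d -> 0 <= d' -> 0 < L ->
  d <= L * d' -> m' <= L^+2 * m -> d / m <= L^+3 * (d' / m').
Proof.
move=> mp m'p d0 d'0 L0 hd hm.
have L2 : 0 <= L^+2 by rewrite exprn_ge0 // ltW.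
have i := inv_le _ _ _ _ mp m'p L2 hm.
have -> : L^+3 * (d' / m') = (L * d') * (L^+2 / m') by rewrite exprS; ring.
apply: ler_pM => //; rewrite invr_ge0 ltW //.
Qed.

Theorem lemma2p1 (R : realType) (X : normedModType R) (M : R -> R -> R)
  (g : X -> X) (L : R) :
  ptolemaic_space X -> nondegenerate_space X ->
  nonneg_on_nonneg M -> symmetric_on_nonneg M -> moderately_increasing2 M ->
  is_emetric (@rhoM R X M) ->
  g 0 = 0 -> 1 <= L ->
  (forall x y, L^-1 * `|x - y| <= `|g x - g y| /\ `|g x - g y| <= L * `|x - y|) ->
  forall x y : X,
    ((L ^+ 3)^-1%:E * rhoM M x y <= rhoM M (g x) (g y))%E /\
    (rhoM M (g x) (g y) <= (L ^+ 3)%:E * rhoM M x y)%E.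
Proof.
move=> _ _ M0 _ Mmi _ g0 L1 gL x y.
have L0 : 0 < L by lra.
have nb : forall z, `|g z| <= L * `|z| /\ `|z| <= L * `|g z|.
  move=> z; have [h1 h2] := gL z 0.
  rewrite g0 !subr0 in h1 h2; split => //.
  rewrite -(ler_pdivrMl _ _ L0); by rewrite mulrC mulrC.
have [gx1 gx2] := nb x; have [gy1 gy2] := nb y.
have [Mx _] := Mmi _ (normr_ge0 x).
have [_ Mgy] := Mmi _ (normr_ge0 (g y)).
have [s1 s2] := mb _ _ _ _ _ Mgy (fun t t0 => M0 _ _ t0 (normr_ge0 _)) L1
  (normr_ge0 x) (normr_ge0 (g x)) gx2 gx1.
have [t1 t2] := mb _ _ _ _ _ Mx (fun t t0 => M0 _ _ (normr_ge0 _) t0) L1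
  (normr_ge0 y) (normr_ge0 (g y)) gy2 gy1.
set m := M `|x| `|y| in t1 t2.
set m' := M `|g x| `|g y| in s1 s2.
set k := M `|x| `|g y| in s1 s2 t1 t2.
have m0 : 0 <= m by apply: M0.
have m'0 : 0 <= m' by apply: M0.
have k0 : 0 <= k by apply: M0.
have [d1 d2] := gL x y.
set d := `|x - y| in d1 d2.
set d' := `|g x - g y| in d1 d2.
have d0 : 0 <= d by exact: normr_ge0.
have d1' : d <= L * d'.
  rewrite -(ler_pdivrMl _ _ L0); by rewrite mulrC mulrC.
have exy : (g x == g y) = (x == y).
  apply/idP/idP => [/eqP e|/eqP ->//].
  rewrite -subr_eq0 -normr_eq0; apply/eqP.
  have : d' = 0 by rewrite /d' e subrr normr0.
  rewrite -/d; move=> h; apply/eqP; rewrite eq_le normr_ge0 andbT.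
  by rewrite -/d; nra.
rewrite /rhoM -/m -/m' -/d -/d' exy.
have [mz|mnz] := eqVneq m 0.
  have kz : k = 0 by apply/eqP; rewrite eq_le k0 andbT; rewrite mz mulr0 in t1.
  have -> : m' == 0 by rewrite eq_le m'0 andbT; rewrite kz mulr0 in s1.
  have L3 : 0 < L ^+ 3 by rewrite exprn_gt0.
  have L3' : 0 < (L ^+ 3)^-1 by rewrite invr_gt0.
  case: (x == y).
    by rewrite !mule0 lexx.
  by split; [exact: leey | rewrite mulry gtr0_sg // mul1e].
have mp : 0 < m by rewrite lt0r mnz.
have m'p : 0 < m'.
  rewrite lt_neqAle m'0 andbT eq_sym; apply/eqP => h; move/eqP: mnz; apply.
  have kz : k = 0 by apply/eqP; rewrite eq_le k0 andbT; rewrite h mulr0 in s2.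
  by apply/eqP; rewrite eq_le m0 andbT; rewrite kz mulr0 in t2.
rewrite gt_eqF //.
rewrite -!EFinM !lee_fin.
have L3 : 0 < L ^+ 3 by rewrite exprn_gt0.
have hm1 : m' <= L^+2 * m.
  apply: le_trans s1 _; rewrite expr2 -mulrA ler_wpM2l ?(ltW L0) //.
have hm2 : m <= L^+2 * m'.
  apply: le_trans t2 _; rewrite expr2 -mulrA ler_wpM2l ?(ltW L0) //.
have d'0 : 0 <= d' by exact: normr_ge0.
split.
  rewrite mulrC ler_pdivrMr // [X in _ <= X]mulrC; exact: key _ _ _ _ _ _ mp m'p d0 d'0 L0 d1' hm1.
exact: key _ _ _ _ _ _ m'p mp d'0 d0 L0 d2 hm2.
Qed.
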